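(* In the concurrent tree algorithm described in the context, for every operation $Op$ and every tree node $v$ on $Op$'s traversal path, the procedure $\mathrm{execute\_until\_timestamp}(Op,v)$ (executing in $v$ all operations in $v$'s queue up to and including $Op$) finishes in a finite number of steps.
   Context: Setting: an asynchronous shared-memory system with a finite set $P$ of processes operating on a concurrent binary search tree with a fictive root whose only child is the real root. Every node $v$ has a unique id, a FIFO queue of operation descriptors, and a pointer to an immutable state record containing $\mathrm{Ts\_Mod}$ (the timestamp of the last modifying operation). Each operation $Op$ has a descriptor with a timestamp, a queue $Op.\mathrm{Traverse}$ of nodes, and a map $Op.\mathrm{Processed}$. Execution of $Op$ proceeds as follows. Insert the descriptor into the root queue, which assigns strictly increasing timestamps in insertion order. Set $Op.\mathrm{Traverse}$ to contain the root. While it is nonempty, take its head $v$, run $\mathrm{execute\_until\_timestamp}(Op,v)$, and pop $v$. $\mathrm{execute\_until\_timestamp}(Op,v)$ repeatedly reads the head descriptor $D$ of $v$'s queue and returns if the queue is empty or if $D.\mathrm{Timestamp}>Op.\mathrm{Timestamp}$. Otherwise it executes $D$ in $v$. Executing $D$ in $v$ consists of the following steps. - Compute the children $C$ of $v$ where $D$ continues. - For each $c\in C$: - push $c$ onto $D.\mathrm{Traverse}$; - if $c$'s $\mathrm{Ts\_Mod}<D.\mathrm{Timestamp}$, make one CAS attempt installing a new state reflecting $D$ with $\mathrm{Ts\_Mod}=D.\mathrm{Timestamp}$; - append $D$ to $c$'s queue unless already appended. - Record ($v$'s id, partial result) in $D.\mathrm{Processed}$ if absent. - Remove $D$ from the head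 of $v$'s queue if still there. No step is retried on failure. *)

(* Defs.v *)
(* MathComp (boot) world. Operational model of the concurrent tree algorithm:
   asynchronous shared memory, interleaving semantics, one atomic
   shared-memory access per process step. *)
From mathcomp Require Import all_boot.

Set Implicit Arguments.
Unset Strict Implicit.
Unset Printing Implicit Defensive.

(* Immutable state record of a node: Ts_Mod plus abstract tree content. *)
Record NState (Cont : Type) := MkNState { ts_mod : nat; content : Cont }.

Record Shared (Node Desc Cont Res : Type) := MkShared {
  clock     : nat;                        (* next timestamp of the root queue *)
  tsOf      : Desc -> option nat;
  queue     : Node -> seq Desc;           (* FIFO queue of each node (head first) *)
  appended  : Node -> seq Desc;           (* descriptors ever appended to a node's queue *)
  nstate    : Node -> nat * NState Cont;  (* state pointer (address, record) *)
  alloc     : nat;                        (* next fresh record address *)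
  trav      : Desc -> seq Node;           (* Op.Traverse (head first) *)
  processed : Desc -> seq (Node * Res)
}.

Inductive PC (Node Desc Cont : Type) :=
| PStart    (i : nat)
| PInitTrav (i : nat)
| PLoop     (i : nat)
| PEUT      (i : nat) (v : Node)                       (* execute_until_timestamp: read head of v's queue *)
| PExec     (i : nat) (v : Node) (D : Desc)
| PChild    (i : nat) (v : Node) (D : Desc) (s : NState Cont) (C : seq Node)
| PChildRd  (i : nat) (v : Node) (D : Desc) (s : NState Cont) (c : Node) (C : seq Node)
| PChildCas (i : nat) (v : Node) (D : Desc) (s : NState Cont) (c : Node) (C : seq Node)
            (old : nat)
| PChildApp (i : nat) (v : Node) (D : Desc) (s : NState Cont) (c : Node) (C : seq Node)
| PRecord   (i : nat) (v : Node) (D : Desc) (s : NState Cont)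
| PRemove   (i : nat) (v : Node) (D : Desc)
| PPop      (i : nat) (v : Node).                      (* execute_until_timestamp returned; pop v *)

Arguments PStart {Node Desc Cont}.
Arguments PInitTrav {Node Desc Cont}.
Arguments PLoop {Node Desc Cont}.
Arguments PEUT {Node Desc Cont}.
Arguments PExec {Node Desc Cont}.
Arguments PChild {Node Desc Cont}.
Arguments PChildRd {Node Desc Cont}.
Arguments PChildCas {Node Desc Cont}.
Arguments PChildApp {Node Desc Cont}.
Arguments PRecord {Node Desc Cont}.
Arguments PRemove {Node Desc Cont}.
Arguments PPop {Node Desc Cont}.

Section Model.

Variables (P : finType) (Node Desc : eqType) (Cont Res : Type).
Variable root : Node.                                  (* the fictive root *)
Variable st0 : Node -> NState Cont.
(* children of v where D continues, given the read state of v *)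
Variable cont : Desc -> Node -> NState Cont -> seq Node.
(* the content of a new state of a child reflecting D *)
Variable upd : Desc -> Node -> Cont -> Cont.
(* partial result of D at v, given the read state of v *)
Variable pres : Desc -> Node -> NState Cont -> Res.
(* the i-th operation (descriptor) executed by process p *)
Variable prog : P -> nat -> Desc.

Definition fupd (A : eqType) (B : Type) (f : A -> B) (a : A) (b : B) : A -> B :=
  fun x => if x == a then b else f x.

Notation Sh := (Shared Node Desc Cont Res).
Notation PCt := (PC Node Desc Cont).

Definition set_clock (S : Sh) (n : nat) : Sh := MkShared n (tsOf S) (queue S) (appended S) (nstate S) (alloc S) (trav S) (processed S).
Definition set_tsOf (S : Sh) (f : Desc -> option nat) : Sh := MkShared (clock S) f (queue S) (appended S) (nstate S) (alloc S) (trav S) (processed S).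
Definition set_queue (S : Sh) (f : Node -> seq Desc) : Sh := MkShared (clock S) (tsOf S) f (appended S) (nstate S) (alloc S) (trav S) (processed S).
Definition set_appended (S : Sh) (f : Node -> seq Desc) : Sh := MkShared (clock S) (tsOf S) (queue S) f (nstate S) (alloc S) (trav S) (processed S).
Definition set_nstate (S : Sh) (f : Node -> nat * NState Cont) : Sh := MkShared (clock S) (tsOf S) (queue S) (appended S) f (alloc S) (trav S) (processed S).
Definition set_alloc (S : Sh) (n : nat) : Sh := MkShared (clock S) (tsOf S) (queue S) (appended S) (nstate S) n (trav S) (processed S).
Definition set_trav (S : Sh) (f : Desc -> seq Node) : Sh := MkShared (clock S) (tsOf S) (queue S) (appended S) (nstate S) (alloc S) f (processed S).
Definition set_processed (S : Sh) (f : Desc -> seq (Node * Res)) : Sh := MkShared (clock S) (tsOf S) (queue S) (appended S) (nstate S) (alloc S) (trav S) f.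

Definition tsD (S : Sh) (D : Desc) : nat := odflt 0 (tsOf S D).

Definition step (p : P) (S : Sh) (pc : PCt) : Sh * PCt :=
  match pc with
  | PStart i =>
      let D := prog p i in
      let S1 := set_tsOf S (fupd (tsOf S) D (Some (clock S))) in
      let S2 := set_clock S1 (clock S).+1 in
      let S3 := set_queue S2 (fupd (queue S) root (rcons (queue S root) D)) in
      let S4 := set_appended S3 (fupd (appended S) root (D :: appended S root)) in
      (S4, PInitTrav i)
  | PInitTrav i =>
      (set_trav S (fupd (trav S) (prog p i) [:: root]), PLoop i)
  | PLoop i =>
      match trav S (prog p i) with
      | [::] => (S, PStart i.+1)
      | v :: _ => (S, PEUT i v)
      end
  | PEUT i v =>
      match queue S v with
      | [::] => (S, PPop i v)
      | D :: _ =>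
          match tsOf S D with
          | Some t => if t <= tsD S (prog p i) then (S, PExec i v D)
                      else (S, PPop i v)
          | None => (S, PPop i v)
          end
      end
  | PExec i v D =>
      let s := (nstate S v).2 in (S, PChild i v D s (cont D v s))
  | PChild i v D s C =>
      match C with
      | [::] => (S, PRecord i v D s)
      | c :: C' => (set_trav S (fupd (trav S) D (rcons (trav S D) c)),
                    PChildRd i v D s c C')
      end
  | PChildRd i v D s c C =>
      let (a, r) := nstate S c in
      if ts_mod r < tsD S D then (S, PChildCas i v D s c C a)
      else (S, PChildApp i v D s c C)
  | PChildCas i v D s c C a =>
      let (a', r) := nstate S c in
      if a' == a then
        let S1 := set_nstate S (fupd (nstate S) c
                     (alloc S, MkNState (tsD S D) (upd D c (content r)))) in
        (set_alloc S1 (alloc S).+1, PChildApp i v D s c C)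
      else (S, PChildApp i v D s c C)
  | PChildApp i v D s c C =>
      if D \in appended S c then (S, PChild i v D s C)
      else
        let S1 := set_appended S (fupd (appended S) c (D :: appended S c)) in
        (set_queue S1 (fupd (queue S) c (rcons (queue S c) D)), PChild i v D s C)
  | PRecord i v D s =>
      if has (fun e => e.1 == v) (processed S D) then (S, PRemove i v D)
      else (set_processed S (fupd (processed S) D (rcons (processed S D) (v, pres D v s))),
            PRemove i v D)
  | PRemove i v D =>
      match queue S v with
      | D' :: q => if D' == D then (set_queue S (fupd (queue S) v q), PEUT i v)
                   else (S, PEUT i v)
      | [::] => (S, PEUT i v)
      end
  | PPop i v =>
      (set_trav S (fupd (trav S) (prog p i) (behead (trav S (prog p i)))), PLoop i)
  end.

Definition init_shared : Sh :=
  MkShared 0 (fun _ => None) (fun _ => [::]) (fun _ => [::])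
           (fun v => (0, st0 v)) 1 (fun _ => [::]) (fun _ => [::]).

(* Configuration after n steps of the schedule sched (sched n = process
   taking step n). *)
Fixpoint run (sched : nat -> P) (n : nat) : Sh * (P -> PCt) :=
  match n with
  | 0 => (init_shared, fun _ => PStart 0)
  | n'.+1 =>
      let (S, pcs) := run sched n' in
      let p := sched n' in
      let (S', pc') := step p S (pcs p) in
      (S', fupd pcs p pc')
  end.

End Model.

(* Main.v *)
Require Import Defs.
From mathcomp Require Import all_boot.
From Stdlib Require Import ClassicalEpsilon.
From mathcomp Require Import zify.
From Stdlib Require Import Lia.

Set Implicit Arguments.
Unset Strict Implicit.
Unset Printing Implicit Defensive.

Section Proof.
Variables (P : finType) (Node Desc : eqType) (Cont Res : Type)
  (root : Node) (st0 : Node -> NState Cont)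
  (cont : Desc -> Node -> NState Cont -> seq Node)
  (upd : Desc -> Node -> Cont -> Cont)
  (pres : Desc -> Node -> NState Cont -> Res)
  (prog : P -> nat -> Desc).
Hypothesis prog_inj : forall p q i j, prog p i = prog q j -> p = q /\ i = j.

Notation Sh := (Shared Node Desc Cont Res).
Notation PCt := (PC Node Desc Cont).
Notation stp := (step root cont upd pres prog).

Definition idx (pc : PCt) : nat :=
  match pc with
  | PStart j => j
  | PInitTrav i | PLoop i | PEUT i _ | PExec i _ _ | PChild i _ _ _ _
  | PChildRd i _ _ _ _ _ | PChildCas i _ _ _ _ _ _ | PChildApp i _ _ _ _ _
  | PRecord i _ _ _ | PRemove i _ _ | PPop i _ => i.+1
  end.

Definition isStart (pc : PCt) : bool := if pc is PStart _ then true else false.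

Definition vD (pc : PCt) : option (Node * Desc) :=
  match pc with
  | PExec _ v D | PChild _ v D _ _ | PChildRd _ v D _ _ _ | PChildCas _ v D _ _ _ _
  | PChildApp _ v D _ _ _ | PRecord _ v D _ | PRemove _ v D => Some (v, D)
  | _ => None
  end.

Definition Glob (S : Sh) :=
  [/\ (forall D1 D2 x, tsOf S D1 = Some x -> tsOf S D2 = Some x -> D1 = D2),
      (forall D x, tsOf S D = Some x -> x < clock S),
      (forall c D, D \in queue S c -> D \in appended S c),
      (forall c, uniq (queue S c)) &
      (forall c D, D \in appended S c -> isSome (tsOf S D))].

Definition ProcOK (S : Sh) (q : P) (pc : PCt) :=
  [/\ (forall j, idx pc <= j -> tsOf S (prog q j) = None),
      (~~ isStart pc -> isSome (tsOf S (prog q (idx pc).-1))) &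
      (forall v D, vD pc = Some (v, D) ->
         [/\ isSome (tsOf S D), D \in appended S v &
             (D \in queue S v -> ohead (queue S v) = Some D)])].

Definition Inv (S : Sh) (pcs : P -> PCt) := Glob S /\ forall r, ProcOK S r (pcs r).

Lemma ProcOK_pc S q pc pc' :
  idx pc = idx pc' -> (~~ isStart pc' -> ~~ isStart pc) -> (vD pc' = None \/ vD pc' = vD pc) ->
  ProcOK S q pc -> ProcOK S q pc'.
Proof.
move=> e1 e2 e3 [h1 h2 h3]; split; rewrite -?e1 //.
  by move/e2.
move=> v D; case: e3 => ->; first by []. exact: h3.
Qed.

Lemma ProcOK_same S S' q pc :
  tsOf S' = tsOf S -> queue S' = queue S -> appended S' = appended S ->
  ProcOK S q pc -> ProcOK S' q pc.
Proof. by move=> e1 e2 e3; rewrite /ProcOK e1 e2 e3. Qed.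

Lemma fupdE (A : eqType) B (f : A -> B) a b x : fupd f a b x = if x == a then b else f x.
Proof. by []. Qed.

Lemma ProcOK_app S S' q pc c D :
  Glob S -> D \notin appended S c ->
  (forall X x, tsOf S X = Some x -> tsOf S' X = Some x) ->
  (forall j, idx pc <= j -> tsOf S (prog q j) = None -> tsOf S' (prog q j) = None) ->
  queue S' = fupd (queue S) c (rcons (queue S c) D) ->
  appended S' = fupd (appended S) c (D :: appended S c) ->
  ProcOK S q pc -> ProcOK S' q pc.
Proof.
move=> [g1 g2 g3 g4 g5] nD hts hj eq ea [h1 h2 h3]; split.
- by move=> j hj'; apply: hj => //; apply: h1.
- move=> /h2; case E: (tsOf S _) => [x|] // _; by rewrite (hts _ _ E).
move=> v D0 /h3 [a1 a2 a3]; split.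
- by case E: (tsOf S D0) a1 => [x|] // _; rewrite (hts _ _ E).
- by rewrite ea fupdE; case: eqP => [Ev|//]; subst; rewrite inE a2 orbT.
rewrite eq fupdE; case: eqP => [Ev|//]; subst c.
rewrite mem_rcons inE; case/orP => [/eqP E|hin].
  by subst D0; rewrite a2 in nD.
have := a3 hin; case: (queue S v) hin => //.
Qed.

Lemma ProcOK_rem S S' q pc c D' qq :
  Glob S -> queue S c = D' :: qq ->
  tsOf S' = tsOf S -> appended S' = appended S ->
  queue S' = fupd (queue S) c qq ->
  ProcOK S q pc -> ProcOK S' q pc.
Proof.
move=> [g1 g2 g3 g4 g5] Eq ets ea eq [h1 h2 h3]; split; rewrite ?ets //.
move=> v D0 /h3 [a1 a2 a3]; split; rewrite ?ea //.
rewrite eq fupdE; case: eqP => [Ev|//]; subst c.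
move=> hin; have := g4 v; rewrite Eq /= => /andP [nin _].
have : D0 \in queue S v by rewrite Eq inE hin orbT.
move/a3; rewrite Eq /= => -[E]; subst D0; by rewrite hin in nin.
Qed.


Definition K0 (S S' : Sh) := [/\ tsOf S' = tsOf S, queue S' = queue S, appended S' = appended S & clock S' = clock S].
Definition KS (S S' : Sh) D := [/\ tsOf S' = fupd (tsOf S) D (Some (clock S)), clock S' = (clock S).+1,
   queue S' = fupd (queue S) root (rcons (queue S root) D) & appended S' = fupd (appended S) root (D :: appended S root)].
Definition KA (S S' : Sh) c D := [/\ D \notin appended S c, tsOf S' = tsOf S, clock S' = clock S,
   queue S' = fupd (queue S) c (rcons (queue S c) D) & appended S' = fupd (appended S) c (D :: appended S c)].
Definition KR (S S' : Sh) c (D' : Desc) qq := [/\ queue S c = D' :: qq, tsOf S' = tsOf S, clock S' = clock S,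
   appended S' = appended S & queue S' = fupd (queue S) c qq].

Lemma step_kind q S pc : let S' := (stp q S pc).1 in
  K0 S S' \/ (exists j, pc = PStart j /\ KS S S' (prog q j)) \/
  (exists i v D s c C, pc = PChildApp i v D s c C /\ KA S S' c D) \/
  (exists c D' qq, KR S S' c D' qq).
Proof.
case: pc => [j|i|i|i v|i v D|i v D s [|c C]|i v D s c C|i v D s c C old|i v D s c C|i v D s|i v D|i v] /=;
  try by left.
- by right; left; exists j.
- by case: (trav S (prog q i)) => [|? ?]; left.
- case: (queue S v) => [|D' qq]; first by left.
  case: (tsOf S D') => [x|]; last by left.
  by case: ifP; left.
- by case: (nstate S c) => a r; case: ifP; left.
- case: (nstate S c) => a r; case: ifP; left => //.
- case: ifP => h; first by left.
  right; right; left; exists i, v, D, s, c, C; split => //; split => //; by rewrite h.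
- by case: ifP; left.
- case E: (queue S v) => [|D' qq]; first by left.
  case: eqP => _; last by left.
  by right; right; right; exists v, D', qq.
Qed.


Lemma glob_step q S pc : Glob S -> ProcOK S q pc -> Glob (stp q S pc).1.
Proof.
move=> G PO; have [g1 g2 g3 g4 g5] := G; have [h1 h2 h3] := PO.
case: (step_kind q S pc) => [K|[[j [Epc K]]|[[i [v [D [s [c [C [Epc K]]]]]]]|[c [D' [qq K]]]]]].
- case: K => e1 e2 e3 e4.
  
by rewrite /Glob e1 e2 e3 e4.
- case: K => e1 e2 e3 e4.
  have Hn : tsOf S (prog q j) = None by apply: h1; rewrite Epc.
  have nA : prog q j \notin appended S root by apply/negP => /g5; rewrite Hn.
  have nQ : prog q j \notin queue S root by apply/negP => /g3; apply/negP.
  split; rewrite ?e1 ?e2 ?e3 ?e4.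
  + move=> D1 D2 x; rewrite !fupdE.
    case: eqP => [->|n1]; case: eqP => [->|n2] //.
    * by move=> [<-] /g2; rewrite ltnn.
    * by move=> /g2 hx [E]; move: hx; rewrite E ltnn.
    * exact: g1.
  + move=> D x; rewrite fupdE; case: eqP => [_ [<-]//|_ /g2 h]; exact: ltnW.
  + move=> c D; rewrite !fupdE; case: eqP => [_|_]; last exact: g3.
    by rewrite mem_rcons !inE; case/orP => [->//|/g3 ->]; rewrite orbT.
  + move=> c; rewrite fupdE; case: eqP => [E|_]; rewrite ?E //; by rewrite rcons_uniq nQ g4.
  + move=> c D; rewrite !fupdE; case: (D =P prog q j) => [->|nD] //.
    case: eqP => [E|_]; rewrite ?E; last exact: g5.
    by rewrite inE; case/orP => [/eqP/nD//|/g5].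
- case: K => nD e1 e2 e3 e4.
  have HD : isSome (tsOf S D) by have := h3 v D; rewrite Epc => /(_ erefl) [].
  have nQ : D \notin queue S c by apply/negP => /g3; apply/negP.
  split; rewrite ?e1 ?e2 ?e3 ?e4 //.
  + move=> c' D0; rewrite !fupdE; case: eqP => [E|_]; rewrite ?E; last exact: g3.
    by rewrite mem_rcons !inE; case/orP => [->//|/g3 ->]; rewrite orbT.
  + move=> c'; rewrite fupdE; case: eqP => [E|_]; rewrite ?E //; by rewrite rcons_uniq nQ g4.
  + move=> c' D0; rewrite !fupdE; case: eqP => [E|_]; rewrite ?E; last exact: g5.
    by rewrite inE; case/orP => [/eqP->//|/g5].
- case: K => Eq e1 e2 e3 e4.
  split; rewrite ?e1 ?e2 ?e3 ?e4 //.
  + move=> c' D0; rewrite !fupdE; case: eqP => [E|_]; rewrite ?E; last exact: g3.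
    by move=> h; apply: g3; rewrite Eq inE h orbT.
  + move=> c'; rewrite fupdE; case: eqP => [E|_]; rewrite ?E //.
    by have := g4 c; rewrite Eq => /andP [].
Qed.

Lemma others_ok q r S pc pcr : Glob S -> ProcOK S q pc -> ProcOK S r pcr ->
  (isStart pc -> r <> q) -> ProcOK (stp q S pc).1 r pcr.
Proof.
move=> G PO PR nrq; have [g1 g2 g3 g4 g5] := G; have [h1 h2 h3] := PO.
case: (step_kind q S pc) => [K|[[j [Epc K]]|[[i [v [D [s [c [C [Epc K]]]]]]]|[c [D' [qq K]]]]]].
- case: K => e1 e2 e3 e4.
  
exact: ProcOK_same PR.
- case: K => e1 e2 e3 e4.
  have Hn : tsOf S (prog q j) = None by apply: h1; rewrite Epc.
  have nA : prog q j \notin appended S root by apply/negP => /g5; rewrite Hn.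
  apply: (ProcOK_app G nA) => //; rewrite ?e1 //.
  + by move=> X x; rewrite fupdE; case: eqP => [->|//]; rewrite Hn.
  + move=> j' _ Hj; rewrite fupdE; case: eqP => [/prog_inj [E _]|//].
    by case: nrq; rewrite ?Epc.
- case: K => nD e1 e2 e3 e4.
  apply: (ProcOK_app G nD) => //; rewrite e1 //.
- case: K => Eq e1 e2 e3 e4.
  exact: (ProcOK_rem G Eq).
Qed.


Lemma own_ok q S pc : Glob S -> ProcOK S q pc -> ProcOK (stp q S pc).1 q (stp q S pc).2.
Proof.
move=> G PO.
case: (boolP (isStart pc)) => hs.
- case: pc hs PO => // j _ [h1 h2 h3]; split => //=.
  + move=> j' hj; rewrite fupdE; case: eqP => [/prog_inj [_ E]|_].
      by subst j'; rewrite ltnn in hj.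
    apply: h1; exact: ltnW.
  + by rewrite fupdE eqxx.
- have O := others_ok G PO PO (fun h => ltac:(by rewrite h in hs)).
  move: O hs PO; case: pc => [j|i|i|i v|i v D|i v D s [|c C]|i v D s c C|i v D s c C old|i v D s c C|i v D s|i v D|i v] //= O _ PO; try by apply: ProcOK_pc O => //; right.
  + move: O; case: (trav S _) => [|w ?] O /=; apply: (ProcOK_pc _ _ _ O) => //; by left.
  + move: O; case E: (queue S v) => [|D0 qq] /=.
      by move=> O; apply: (ProcOK_pc _ _ _ O) => //; left.
    case Et: (tsOf S D0) => [x|] /=; last by move=> O; apply: (ProcOK_pc _ _ _ O) => //; left.
    case: ifP => _ O; last by apply: (ProcOK_pc _ _ _ O) => //; left.
    have [g1 g2 g3 g4 g5] := G; have [h1 h2 h3] := O; split => // v' D' [<- <-]; split.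
    * by rewrite Et.
    * by apply: g3; rewrite E inE eqxx.
    * by rewrite E.
  + move: O; case: (nstate S c) => a r /=; case: ifP => _ O; apply: (ProcOK_pc _ _ _ O) => //; by right.
  + move: O; case: (nstate S c) => a r /=; case: ifP => _ O; apply: (ProcOK_pc _ _ _ O) => //; by right.
  + move: O; case: ifP => _ O; apply: (ProcOK_pc _ _ _ O) => //; by right.
  + move: O; case: ifP => _ O; apply: (ProcOK_pc _ _ _ O) => //; by right.
  + move: O; case: (queue S v) => [|D' qq] /=; last case: ifP => _;
      move=> O; apply: (ProcOK_pc _ _ _ O) => //; by left.
Qed.


Lemma inv_step q S pcs : Inv S pcs ->
  Inv (stp q S (pcs q)).1 (fupd pcs q (stp q S (pcs q)).2).
Proof.
move=> [G PO]; split; first exact: glob_step.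
move=> r; rewrite fupdE; case: eqP => [->|nrq]; first exact: own_ok.
by apply: others_ok.
Qed.

Definition pending (S : Sh) v x :=
  exists D, tsOf S D = Some x /\ (D \notin appended S v \/ D \in queue S v).

Lemma step_mono q S pc : Glob S -> ProcOK S q pc -> let S' := (stp q S pc).1 in
  [/\ clock S <= clock S', (forall X x, tsOf S X = Some x -> tsOf S' X = Some x),
      (forall c D, D \in appended S c -> D \in appended S' c) &
      (forall v x, x < clock S -> pending S' v x -> pending S v x)].
Proof.
move=> G PO; have [g1 g2 g3 g4 g5] := G; have [h1 h2 h3] := PO.
case: (step_kind q S pc) => [K|[[j [Epc K]]|[[i [v [D [s [c [C [Epc K]]]]]]]|[c [D' [qq K]]]]]].
- case: K => e1 e2 e3 e4 /=; rewrite /pending e1 e2 e3 e4; split => //.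
- case: K => e1 e2 e3 e4.
  have Hn : tsOf S (prog q j) = None by apply: h1; rewrite Epc.
  split; rewrite ?e1 ?e2 ?e3 ?e4 //.
  + by move=> X x; rewrite fupdE; case: eqP => [->|//]; rewrite Hn.
  + by move=> c D; rewrite fupdE; case: eqP => // E h; rewrite inE -E h orbT.
  + move=> v x hx [D [hD hA]]; exists D; move: hD hA; rewrite e1 e3 e4 !fupdE.
    case: eqP => [_ [E]|nD hD hA]; first by rewrite E ltnn in hx.
    split => //; move: hA; case: eqP => [Ev|_] // [].
      by rewrite Ev inE negb_or => /andP [_ ->]; left.
    by rewrite Ev mem_rcons inE => /orP [/eqP//|]; right.
- case: K => nD e1 e2 e3 e4.
  split; rewrite ?e1 ?e2 ?e3 ?e4 //.
  + by move=> c' D0; rewrite fupdE; case: eqP => // E h; rewrite inE -E h orbT.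
  + move=> w x hx [D0 [hD hA]]; exists D0; move: hD hA; rewrite e1 e3 e4 !fupdE => hD hA.
    split => //; move: hA; case: eqP => [Ew|_] // [].
      by rewrite Ew inE negb_or => /andP [_ ->]; left.
    rewrite Ew mem_rcons inE => /orP [/eqP E|]; last by right.
    by left; rewrite E.
- case: K => Eq e1 e2 e3 e4.
  split; rewrite ?e1 ?e2 ?e3 ?e4 //.
  move=> w x hx [D0 [hD hA]]; exists D0; move: hD hA; rewrite e1 e3 e4 !fupdE => hD hA.
  split => //; move: hA; case: eqP => [Ew|_] // [] ; first by left.
  by move=> h; right; rewrite Ew Eq inE h orbT.
Qed.


Lemma step_EUT q S i v : (stp q S (PEUT i v)).1 = S /\
  ((stp q S (PEUT i v)).2 = PPop i v \/ exists D qq x, [/\ queue S v = D :: qq, tsOf S D = Some x,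
       x <= tsD S (prog q i) & (stp q S (PEUT i v)).2 = PExec i v D]).
Proof.
rewrite /=; case E: (queue S v) => [|D qq] /=; first by split => //; left.
case Et: (tsOf S D) => [x|] /=; last by split => //; left.
case: ifP => h /=; split => //; [right; by exists D, qq, x|by left].
Qed.

Lemma step_Exec q S i v D : exists s C, (stp q S (PExec i v D)).2 = PChild i v D s C.
Proof. by rewrite /=; eexists; eexists. Qed.

Definition inFam i v D (pc : PCt) : bool :=
  match pc with
  | PChild i' v' D' _ _ | PChildRd i' v' D' _ _ _ | PChildCas i' v' D' _ _ _ _
  | PChildApp i' v' D' _ _ _ | PRecord i' v' D' _ => [&& i' == i, v' == v & D' == D]
  | _ => false
  end.

Definition rankC (pc : PCt) : nat :=
  match pc with
  | PChild _ _ _ _ C => 4 * size C + 1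
  | PChildRd _ _ _ _ _ C => 4 * size C + 4
  | PChildCas _ _ _ _ _ C _ => 4 * size C + 3
  | PChildApp _ _ _ _ _ C => 4 * size C + 2
  | _ => 0
  end.

Lemma fam_step q S i v D pc : inFam i v D pc ->
  (stp q S pc).2 = PRemove i v D \/ (inFam i v D (stp q S pc).2 /\ rankC (stp q S pc).2 < rankC pc).
Proof.
case: pc => //= [i' v' D' s [|c C]|i' v' D' s c C|i' v' D' s c C old|i' v' D' s c C|i' v' D' s]
  /and3P [/eqP -> /eqP -> /eqP ->] /=.
- by right; rewrite !eqxx.
- by right; rewrite !eqxx /=; split => //; lia.
- case: (nstate S c) => a r; case: ifP => _ /=; right; rewrite !eqxx; split => //; lia.
- case: (nstate S c) => a r; case: ifP => _ /=; right; rewrite !eqxx; split => //; lia.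
- case: ifP => _ /=; right; rewrite !eqxx; split => //; lia.
- by case: ifP => _ /=; left.
Qed.

Lemma step_Remove q S i v D : Glob S -> (D \in queue S v -> ohead (queue S v) = Some D) ->
  (stp q S (PRemove i v D)).2 = PEUT i v /\ D \notin queue (stp q S (PRemove i v D)).1 v.
Proof.
move=> [g1 g2 g3 g4 g5] hh; rewrite /=.
case E: (queue S v) hh => [|D' qq] hh /=; first by rewrite E.
case: eqP => [ED|nD] /=.
  split => //; rewrite fupdE eqxx; have := g4 v; rewrite E /= => /andP [] ; by rewrite ED.
split => //; rewrite E; apply/negP => hin; move: (hh hin) => [ED]; exact: nD ED.
Qed.


Variable sched : nat -> P.
Notation cfg n := (run root st0 cont upd pres prog sched n).

Lemma run_succ n : cfg n.+1 =
  ((stp (sched n) (cfg n).1 ((cfg n).2 (sched n))).1,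
   fupd (cfg n).2 (sched n) (stp (sched n) (cfg n).1 ((cfg n).2 (sched n))).2).
Proof. by rewrite /=; case: (run _ _ _ _ _ _ _ n) => S pcs; case: (step _ _ _ _ _ _ _ _). Qed.

Lemma inv_run n : Inv (cfg n).1 (cfg n).2.
Proof.
elim: n => [|n IH].
  split; first by split.
  by move=> r; split.
rewrite run_succ; exact: inv_step.
Qed.

Lemma pc_other n r : sched n <> r -> (cfg n.+1).2 r = (cfg n).2 r.
Proof. by move=> h; rewrite run_succ /= fupdE; case: eqP => // E; case: h. Qed.

Lemma pc_self n r : sched n = r -> (cfg n.+1).2 r = (stp r (cfg n).1 ((cfg n).2 r)).2.
Proof. by move=> <-; rewrite run_succ /= fupdE eqxx. Qed.

Lemma sh_succ n : (cfg n.+1).1 = (stp (sched n) (cfg n).1 ((cfg n).2 (sched n))).1.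
Proof. by rewrite run_succ. Qed.

Lemma mono_run n m : n <= m ->
  [/\ clock (cfg n).1 <= clock (cfg m).1,
      (forall X x, tsOf (cfg n).1 X = Some x -> tsOf (cfg m).1 X = Some x),
      (forall c D, D \in appended (cfg n).1 c -> D \in appended (cfg m).1 c) &
      (forall v x, x < clock (cfg n).1 -> pending (cfg m).1 v x -> pending (cfg n).1 v x)].
Proof.
move/subnK => <-; elim: (m - n) => [|k [a1 a2 a3 a4]]; first by split.
rewrite addSn; have [G PO] := inv_run (k + n).
have [b1 b2 b3 b4] := step_mono (G) (PO (sched (k + n))); rewrite sh_succ.
split.
- exact: leq_trans b1.
- by move=> X x /a2 /b2.
- by move=> c D /a3 /b3.
- move=> v x hx /b4 h; apply: a4 => //; apply: h; exact: leq_trans hx a1.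
Qed.

Lemma wait p (Q : nat -> Prop) n : (forall T, exists2 t', T <= t' & sched t' = p) ->
  Q n -> (forall m, n <= m -> Q m -> sched m <> p -> Q m.+1) ->
  exists m, [/\ n <= m, Q m & sched m = p].
Proof.
move=> fair Qn hstep; have [t' hle hst] := fair n.
have: forall d m, n <= m -> m <= t' -> Q m -> t' - m <= d -> exists m, [/\ n <= m, Q m & sched m = p].
  elim=> [|d IH] m nm mt Qm hd.
    have E : m = t' by lia.
    by exists m; split => //; rewrite E.
  case: (eqVneq (sched m) p) => [sp|nsp]; first by exists m.
  have : m <> t' by move=> E; rewrite E hst eqxx in nsp.
  move=> ne.
  apply: (IH m.+1); [exact: leqW | lia | apply: hstep => //; exact/eqP | lia].
by move=> /(_ (t' - n) n (leqnn n) hle Qn (leqnn _)).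
Qed.


Definition pb (S : Sh) v x : bool :=
  if excluded_middle_informative (pending S v x) then true else false.

Lemma pbP S v x : pb S v x <-> pending S v x.
Proof. by rewrite /pb; case: excluded_middle_informative. Qed.

Lemma count_mono (a b : pred nat) s : (forall x, x \in s -> a x -> b x) -> count a s <= count b s.
Proof.
elim: s => //= y s IH h.
apply: leq_add; last by apply: IH => x hx; apply: h; rewrite inE hx orbT.
case ha: (a y) => //=; by rewrite (h y) // inE eqxx.
Qed.

Lemma count_strict (a b : pred nat) s x0 : (forall x, x \in s -> a x -> b x) ->
  x0 \in s -> b x0 -> ~~ a x0 -> count a s < count b s.
Proof.
elim: s => //= y s IH h; rewrite inE => /orP [/eqP E|hx] hb na.
  subst y; rewrite (negbTE na) hb add0n add1n ltnS.
  by apply: count_mono => x hx; apply: h; rewrite inE hx orbT.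
have h' : forall x, x \in s -> a x -> b x by move=> x hx0; apply: h; rewrite inE hx0 orbT.
have := IH h' hx hb na.
case ha: (a y) => /=; last by move=> H; apply: leq_trans H _; exact: leq_addl.
by rewrite (h y) // ?inE ?eqxx // !add1n ltnS.
Qed.

Section Fair.
Variable p : P.
Hypothesis fair : forall T, exists2 t', T <= t' & sched t' = p.

Lemma wait_same n : exists m, [/\ n <= m, (cfg m).2 p = (cfg n).2 p & sched m = p].
Proof.
apply: (wait (Q := fun m => (cfg m).2 p = (cfg n).2 p)) => // m _ Qm ns.
by rewrite pc_other.
Qed.

Lemma fam_reach i v D k : forall m, inFam i v D ((cfg m).2 p) -> rankC ((cfg m).2 p) <= k ->
  exists m', m <= m' /\ (cfg m').2 p = PRemove i v D.
Proof.
elim: k => [|k IH] m hf hr;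
  have [m1 [nm1 Q1 s1]] := wait_same m;
  have := @fam_step p (cfg m1).1 i v D _ hf; rewrite -Q1 -pc_self //;
  case => [E|[hf' hr']].
- by exists m1.+1; split => //; exact: leqW.
- by move: hr; rewrite Q1 in hr'; lia.
- by exists m1.+1; split => //; exact: leqW.
- have [m' [le E]] := IH m1.+1 hf' (ltac:(rewrite Q1 in hr'; lia)).
  by exists m'; split => //; apply: leq_trans le; exact: leqW.
Qed.


Definition Mv v T m := count (pb (cfg m).1 v) (iota 0 T.+1).

Lemma Mv_mono v T n m : n <= m -> T < clock (cfg n).1 -> Mv v T m <= Mv v T n.
Proof.
move=> nm hT; apply: count_mono => x; rewrite mem_iota add0n => /andP [_ hx] /pbP h; apply/pbP.
have [_ _ _ h4] := mono_run nm; apply: h4 h; exact: leq_ltn_trans hT.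
Qed.

Lemma iter i v T n : (cfg n).2 p = PEUT i v -> tsOf (cfg n).1 (prog p i) = Some T ->
  exists m, n <= m /\ ((cfg m).2 p = PPop i v \/
    [/\ (cfg m).2 p = PEUT i v, tsOf (cfg m).1 (prog p i) = Some T & Mv v T m < Mv v T n]).
Proof.
move=> Hn Tn.
have [m1 [nm1 Q1 s1]] := wait_same n; rewrite Hn in Q1.
have ts1 : tsOf (cfg m1).1 (prog p i) = Some T by have [_ h _ _] := mono_run nm1; exact: h.
have [E1 [E2|[D [qq [x [Eq Ex xle E2]]]]]] := step_EUT p (cfg m1).1 i v.
  by exists m1.+1; split; [exact: leqW | left; rewrite pc_self // Q1 E2].
have xT : x <= T by move: xle; rewrite /tsD ts1.
have pend1 : pending (cfg m1).1 v x by exists D; split => //; right; rewrite Eq inE eqxx.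
have P2 : (cfg m1.+1).2 p = PExec i v D by rewrite pc_self // Q1 E2.
have [m2 [nm2 Q2 s2]] := wait_same m1.+1; rewrite P2 in Q2.
have [s [C E3]] := step_Exec p (cfg m2).1 i v D.
have P3 : (cfg m2.+1).2 p = PChild i v D s C by rewrite pc_self // Q2 E3.
have [m3 [nm3 Q3]] := fam_reach (k := rankC (PChild i v D s C)) (m := m2.+1) (i := i) (v := v) (D := D)
  ltac:(by rewrite P3 /= !eqxx) ltac:(by rewrite P3).
have [m4 [nm4 Q4 s4]] := wait_same m3; rewrite Q3 in Q4.
have [G4 PO4] := inv_run m4.
have [_ _ h3] := PO4 p; rewrite Q4 in h3; have [st4 ap4 hd4] := h3 v D erefl.
have [R1 R2] := step_Remove p i G4 hd4.
have le14 : m1 <= m4.+1 by lia.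
have [G5 _] := inv_run m4.+1.
have nopend : ~ pending (cfg m4.+1).1 v x.
  move=> [D2 [h2 h2']].
  have tD : tsOf (cfg m4.+1).1 D = Some x by have [_ h _ _] := mono_run le14; exact: h.
  have [g1 _ _ _ _] := G5; have ED := g1 _ _ _ h2 tD; subst D2.
  have apD : D \in appended (cfg m4.+1).1 v.
    by rewrite sh_succ s4; have [_ _ h _] := @step_mono p _ _ G4 (PO4 p); apply: h.
  case: h2' => [/negP //|]; by rewrite sh_succ s4 Q4 (negbTE R2).
exists m4.+1; split; first lia.
right; split.
- by rewrite pc_self // Q4 R1.
- by have [_ h _ _] := mono_run (ltac:(lia) : n <= m4.+1); exact: h.
have [g1 g2 _ _ _] := G4.
have hT1 : T < clock (cfg m1).1 by have [[_ hg _ _ _] _] := inv_run m1; exact: hg _ _ ts1.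
have hTn : T < clock (cfg n).1 by have [[_ hg _ _ _] _] := inv_run n; exact: hg _ _ Tn.
have lt : Mv v T m4.+1 < Mv v T m1.
  rewrite /Mv; apply: (count_strict (x0 := x)).
  - move=> y; rewrite mem_iota add0n => /andP [_ hy] /pbP h; apply/pbP.
    have [_ _ _ h4] := mono_run le14; apply: h4 h; exact: leq_ltn_trans hT1.
  - by rewrite mem_iota add0n ltnS xT.
  - by apply/pbP.
  - by apply/negP => /pbP.
exact: leq_trans lt (Mv_mono v nm1 hTn).
Qed.

Lemma final i v t : (cfg t).2 p = PEUT i v ->
  exists2 t', t <= t' & (cfg t').2 p = PPop i v.
Proof.
move=> Ht.
have [_ PO] := inv_run t; have [_ h2 _] := PO p; rewrite Ht /= in h2; have h2' : isSome (tsOf (cfg t).1 (prog p i)) := h2 isT.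
case Ets: (tsOf (cfg t).1 (prog p i)) => [T|]; last by rewrite Ets in h2'.
suff: forall k n, t <= n -> (cfg n).2 p = PEUT i v -> tsOf (cfg n).1 (prog p i) = Some T ->
  Mv v T n <= k -> exists2 t', t <= t' & (cfg t').2 p = PPop i v.
  by move=> /(_ _ t (leqnn t) Ht Ets (leqnn _)).
elim=> [|k IH] n tn Hn Tn Mk;
  have [m [nm [E|[Em Tm Mm]]]] := iter Hn Tn;
  try (by exists m => //; lia).
all: intros; apply: (IH m) => //; lia.
Qed.

End Fair.
End Proof.

Theorem lemma2 (P : finType) (Node Desc : eqType) (Cont Res : Type)
  (root : Node) (st0 : Node -> NState Cont)
  (cont : Desc -> Node -> NState Cont -> seq Node)
  (upd : Desc -> Node -> Cont -> Cont)
  (pres : Desc -> Node -> NState Cont -> Res)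
  (prog : P -> nat -> Desc)
  (prog_inj : forall p q i j, prog p i = prog q j -> p = q /\ i = j)
  (sched : nat -> P) (t : nat) (p : P) (i : nat) (v : Node) :
  (run root st0 cont upd pres prog sched t).2 p = PEUT i v ->
  (forall T, exists2 t', T <= t' & sched t' = p) ->
  exists2 t', t <= t' & (run root st0 cont upd pres prog sched t').2 p = PPop i v.
Proof.
move=> Ht fair.
exact: (final prog_inj fair Ht).
Qed.
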